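(* Let $\mathcal{M}=\langle S,\iota,\mathsf{Act},P,\mathsf{Z},\mathsf{obs}\rangle$ be an MDP. For every trace $\tau\in\mathsf{Z}^+$, the set $V(\mathsf{est}_{\mathsf{MDP}}(\tau))$ is finite.
   Context: An MDP is a tuple $\langle S,\iota,\mathsf{Act},P,\mathsf{Z},\mathsf{obs}\rangle$: finite state set $S$, initial distribution $\iota\in\mathsf{Distr}(S)$, finite action set $\mathsf{Act}$, partial transition function $P\colon S\times\mathsf{Act}\rightharpoonup\mathsf{Distr}(S)$ (write $P(s,\alpha,s')=P(s,\alpha)(s')$), finite observation set $\mathsf{Z}$, observation function $\mathsf{obs}\colon S\to\mathsf{Distr}(\mathsf{Z})$; $\mathsf{AvAct}(s)=\{\alpha\mid P(s,\alpha)\text{ defined}\}\neq\emptyset$. Beliefs: $\mathsf{Bel}=\mathsf{Distr}(S)\cup\{\mathbf{0}\}$, viewed as vectors in $\mathbb{R}^S$. $\mathsf{est}_{\mathsf{MDP}}\colon\mathsf{Z}^+\to2^{\mathsf{Bel}}$: $\mathsf{est}_{\mathsf{MDP}}(z)=\{b_z\}$ with $b_z(s)=\iota(s)\mathsf{obs}(s)(z)/\sum_{\hat s}\iota(\hat s)\mathsf{obs}(\hat s)(z)$ (or $\mathbf{0}$ if the denominator is $0$), and $\mathsf{est}_{\mathsf{MDP}}(\tau\cdot z)=\bigcup_{\mathsf{bel}\in\mathsf{est}_{\mathsf{MDP}}(\tau)}\mathsf{est}^{\mathsf{up}}(\mathsf{bel},z)$, where $\mathsf{bel}'\in\mathsf{est}^{\mathsf{up}}(\mathsf{bel},z)$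 iff there is $\varsigma\colon S\to\mathsf{Distr}(\mathsf{Act})$ with $\varsigma(s)$ supported in $\mathsf{AvAct}(s)$ and $\mathsf{bel}'(s')=\dfrac{\sum_s\mathsf{bel}(s)\sum_\alpha\varsigma(s)(\alpha)P(s,\alpha,s')\mathsf{obs}(s')(z)}{\sum_s\mathsf{bel}(s)\sum_\alpha\varsigma(s)(\alpha)\sum_{\hat s}P(s,\alpha,\hat s)\mathsf{obs}(\hat s)(z)}$ for all $s'$ ($0/0=0$). For $B\subseteq\mathsf{Bel}$, $V(B)$ is the set of elements of $B$ that are not convex combinations of other elements of $B$ (vertices of the convex hull of $B$). *)

(* Defs.v *)
From HB Require Import structures.
From mathcomp Require Import all_boot all_order all_algebra.
From mathcomp Require Import boolp classical_sets cardinality reals.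
Set Implicit Arguments. Unset Strict Implicit. Unset Printing Implicit Defensive.
Import Order.TTheory GRing.Theory Num.Theory.
Local Open Scope ring_scope.
Local Open Scope classical_set_scope.

Section MDPDefs.
Variables (R : realType) (S Act Z : finType).

Definition is_distr (T : finType) (f : T -> R) : Prop :=
  (forall t, 0 <= f t) /\ \sum_(t : T) f t = 1.

(* An MDP <S, iota, Act, P, Z, obs>; the partial transition function is
   P : S -> Act -> option (S -> R), with P s a = None meaning undefined. *)
Record MDP := {
  iota : S -> R;
  iota_distr : is_distr iota;
  trans : S -> Act -> option (S -> R);
  trans_distr : forall s a d, trans s a = Some d -> is_distr d;
  avact_nonempty : forall s, exists a, trans s a <> None;
  obs : S -> Z -> R;
  obs_distr : forall s, is_distr (obs s)
}.

Variable M : MDP.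

Definition AvAct (s : S) (a : Act) : Prop := trans M s a <> None.

(* P(s, a, s'), used only for available actions *)
Definition Pt (s : S) (a : Act) (s' : S) : R :=
  match trans M s a with Some d => d s' | None => 0 end.

Definition belief := S -> R.

(* Initial belief b_z; MathComp division by 0 yields 0, i.e. b_z = 0
   when the denominator vanishes. *)
Definition init_belief (z : Z) : belief :=
  fun s => iota M s * obs M s z / \sum_(sh : S) iota M sh * obs M sh z.

(* bel' \in est^up(bel, z) ; 0/0 = 0 holds by MathComp's x/0 = 0. *)
Definition est_up (bel : belief) (z : Z) (bel' : belief) : Prop :=
  exists sigma : S -> Act -> R,
    (forall s a, 0 <= sigma s a) /\
    (forall s, \sum_(a : Act) sigma s a = 1) /\
    (forall s a, ~ AvAct s a -> sigma s a = 0) /\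
    (forall s', bel' s' =
       (\sum_(s : S) bel s * \sum_(a : Act) sigma s a * Pt s a s' * obs M s' z) /
       (\sum_(s : S) bel s * \sum_(a : Act) sigma s a *
            \sum_(sh : S) Pt s a sh * obs M sh z)).

(* est_MDP on a nonempty trace z0 :: zs (i.e. z0 z1 ... zn). *)
Definition est_MDP (z0 : Z) (zs : seq Z) : set belief :=
  foldl (fun B z => [set b' | exists2 b, B b & est_up b z b'])
        [set init_belief z0] zs.

End MDPDefs.

Definition cvx_comb_of (R : realType) (S : finType) (A : set (S -> R)) (b : S -> R) : Prop :=
  exists (n : nat) (w : 'I_n -> R) (x : 'I_n -> S -> R),
    (forall i, 0 <= w i) /\ \sum_(i < n) w i = 1 /\ (forall i, A (x i)) /\
    (forall s, b s = \sum_(i < n) w i * x i s).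

Definition vertices (R : realType) (S : finType) (B : set (S -> R)) : set (S -> R) :=
  [set b | B b /\ ~ cvx_comb_of (B `\ b) b].

(* Main.v *)
Require Import Defs.
From mathcomp Require Import all_boot all_order all_algebra.
From mathcomp Require Import boolp classical_sets cardinality reals.
From mathcomp Require Import ring.
Set Implicit Arguments. Unset Strict Implicit. Unset Printing Implicit Defensive.
Import Order.TTheory GRing.Theory Num.Theory.
Local Open Scope ring_scope.
Local Open Scope classical_set_scope.

Section Proof.
Variables (R : realType) (S Act Z : finType) (M : MDP R S Act Z).

Definition gen_prop (B : set (S -> R)) : Prop :=
  (forall b, B b -> forall s, 0 <= b s) /\
  exists (I : finType) (x : I -> S -> R), (forall i, B (x i)) /\
    forall b, B b -> exists w : I -> R, (forall i, 0 <= w i) /\ \sum_i w i = 1 /\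
       forall s, b s = \sum_i w i * x i s.

Lemma Pt_ge0 s a s' : 0 <= Pt M s a s'.
Proof.
rewrite /Pt; case E: (trans M s a) => [d|] //.
by have [h _] := trans_distr E.
Qed.

Lemma obs_ge0 s z : 0 <= obs M s z.
Proof. by have [h _] := obs_distr M s. Qed.

Definition Kf (f : S -> R) (g : S -> Act -> R) (tau : S -> Act -> R) :=
  \sum_s f s * \sum_a tau s a * g s a.
Definition lam (sigma : S -> Act -> R) (d : {ffun S -> Act}) := \prod_s sigma s (d s).
Definition sdet (d : {ffun S -> Act}) : S -> Act -> R := fun s a => (a == d s)%:R.

Lemma Kf_det f g d : Kf f g (sdet d) = \sum_s f s * g s (d s).
Proof.
apply: eq_bigr => s _; congr (_ * _).
rewrite (bigD1 (d s)) //= /sdet eqxx mul1r big1 ?addr0 // => a /negbTE ->.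
by rewrite mul0r.
Qed.

Lemma lam_decomp sigma (K : S -> Act -> R) s0 :
  (forall s, \sum_a sigma s a = 1) ->
  \sum_d lam sigma d * K s0 (d s0) = \sum_a sigma s0 a * K s0 a.
Proof.
move=> h1.
pose F s a := sigma s a * (if s == s0 then K s a else 1).
have E : \prod_s \sum_a F s a = \sum_(d : {ffun S -> Act}) \prod_s F s (d s)
  := bigA_distr_bigA F.
have E1 : \prod_(s | s != s0) \sum_a F s a = 1.
  apply: big1 => s /negbTE hs; rewrite /F hs.
  by under eq_bigr do rewrite mulr1.
rewrite (bigD1 s0) //= E1 mulr1 /F eqxx in E; rewrite E.
apply: eq_bigr => d _; rewrite /F big_split /=; congr (_ * _).
rewrite (bigD1 s0) //= eqxx big1 ?mulr1 // => s /negbTE hs.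
by rewrite hs.
Qed.

Lemma lam_ge0 sigma d : (forall s a, 0 <= sigma s a) -> 0 <= lam sigma d.
Proof. by move=> h; apply: prodr_ge0. Qed.

Lemma Kf_decomp f g sigma :
  (forall s, \sum_a sigma s a = 1) ->
  \sum_d lam sigma d * Kf f g (sdet d) = Kf f g sigma.
Proof.
move=> h1.
under eq_bigr do rewrite Kf_det mulr_sumr.
rewrite exchange_big; apply: eq_bigr => s _.
rewrite (lam_decomp (fun s a => f s * g s a)) // mulr_sumr.
by apply: eq_bigr => a _; rewrite mulrCA.
Qed.

Lemma Kf_lin (I : finType) (x : I -> S -> R) w b g tau :
  (forall s, b s = \sum_i w i * x i s) ->
  Kf b g tau = \sum_i w i * Kf (x i) g tau.
Proof.
move=> wb; rewrite /Kf.
under eq_bigr do rewrite wb mulr_suml.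
rewrite exchange_big; apply: eq_bigr => i _; rewrite mulr_sumr.
by apply: eq_bigr => s _; rewrite mulrA.
Qed.

Lemma Kf_ge0 f g tau : (forall s, 0 <= f s) -> (forall s a, 0 <= g s a) ->
  (forall s a, 0 <= tau s a) -> 0 <= Kf f g tau.
Proof.
move=> hf hg ht; apply: sumr_ge0 => s _; apply: mulr_ge0 => //.
by apply: sumr_ge0 => a _; apply: mulr_ge0.
Qed.

Lemma comb (I : finType) (x : I -> S -> R) w b sigma g :
  (forall s, \sum_a sigma s a = 1) ->
  (forall s, b s = \sum_i w i * x i s) ->
  \sum_(p : I * {ffun S -> Act}) w p.1 * lam sigma p.2 * Kf (x p.1) g (sdet p.2)
  = Kf b g sigma.
Proof.
move=> h1 wb.
rewrite -(pair_bigA _ (fun i d => w i * lam sigma d * Kf (x i) g (sdet d))) /=.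
rewrite (Kf_lin _ _ wb); apply: eq_bigr => i _.
rewrite -(Kf_decomp _ _ h1) mulr_sumr; apply: eq_bigr => d _.
by rewrite mulrA.
Qed.


Definition Num z f tau s' := Kf f (fun s a => Pt M s a s' * obs M s' z) tau.
Definition Den z f tau := Kf f (fun s a => \sum_sh Pt M s a sh * obs M sh z) tau.

Lemma Num_eq z f tau s' :
  \sum_(s : S) f s * \sum_(a : Act) tau s a * Pt M s a s' * obs M s' z
  = Num z f tau s'.
Proof.
apply: eq_bigr => s _; congr (_ * _); apply: eq_bigr => a _; by rewrite mulrA.
Qed.

Lemma Den_sum z f tau : Den z f tau = \sum_s' Num z f tau s'.
Proof.
rewrite /Num /Den /Kf exchange_big; apply: eq_bigr => s _.
rewrite -mulr_sumr; congr (_ * _); rewrite exchange_big; apply: eq_bigr => a _.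
by rewrite mulr_sumr.
Qed.

Lemma Num_ge0 z f tau s' : (forall s, 0 <= f s) -> (forall s a, 0 <= tau s a) ->
  0 <= Num z f tau s'.
Proof.
move=> hf ht; apply: Kf_ge0 => // s a; apply: mulr_ge0; [exact: Pt_ge0|exact: obs_ge0].
Qed.

Lemma Den_ge0 z f tau : (forall s, 0 <= f s) -> (forall s a, 0 <= tau s a) ->
  0 <= Den z f tau.
Proof.
move=> hf ht; rewrite Den_sum; apply: sumr_ge0 => s' _; exact: Num_ge0.
Qed.

Lemma Den0_Num0 z f tau s' : (forall s, 0 <= f s) -> (forall s a, 0 <= tau s a) ->
  Den z f tau = 0 -> Num z f tau s' = 0.
Proof.
move=> hf ht; rewrite Den_sum => h.
by apply: (psumr_eq0P _ h) => // i _; exact: Num_ge0.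
Qed.

Lemma sdet_ge0 d s a : 0 <= sdet d s a.
Proof. by rewrite /sdet ler0n. Qed.

Lemma sdet_sum d s : \sum_a sdet d s a = 1.
Proof.
rewrite (bigD1 (d s)) //= /sdet eqxx big1 ?addr0 // => a /negbTE ->.
by [].
Qed.

Lemma step z B : gen_prop B ->
  gen_prop [set b' | exists2 b, B b & est_up M b z b'].
Proof.
move=> [nonneg [I [x [xB xgen]]]].
set B' := [set b' | exists2 b, B b & est_up M b z b'].
split.
  move=> b' [b Bb [sigma [h0 [h1 [h2 hb']]]]] s'.
  rewrite hb' Num_eq; apply: divr_ge0; [exact: (Num_ge0 _ _ (nonneg b Bb) h0)|exact: (Den_ge0 _ (nonneg b Bb) h0)].
case: (pselect (exists y0, B' y0)) => [[y0 y0B] | nB']; last first.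
  exists 'I_0, (fun _ => fun _ => 0); split; first by case.
  by move=> b Bb; exfalso; apply: nB'; exists b.
pose J := ('I_1 + (I * {ffun S -> Act}))%type.
pose y (j : J) : S -> R := match j with
  | inl _ => fun _ => 0
  | inr p => fun s' => Num z (x p.1) (sdet p.2) s' / Den z (x p.1) (sdet p.2) end.
pose y' (j : J) := if pselect (B' (y j)) then y j else y0.
have y'E : forall j, B' (y j) -> y' j = y j.
  by move=> j h; rewrite /y'; case: (pselect (B' (y j))).
exists J, y'; split.
  by move=> j; rewrite /y'; case: pselect.
move=> b' [b Bb hest]; have [sigma [h0 [h1 [h2 hb']]]] := hest.
have [w [w0 [w1 wb]]] := xgen b Bb.
have hb : forall s', b' s' = Num z b sigma s' / Den z b sigma.
  by move=> s'; rewrite hb' Num_eq.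
have xnn : forall i s, 0 <= x i s by move=> i s; apply: nonneg.
case: (eqVneq (Den z b sigma) 0) => hD.
  have b'0 : b' = (fun _ => 0) by apply: funext => s'; rewrite hb hD invr0 mulr0.
  have By : B' (y (inl ord0)).
    by rewrite /y -b'0; exists b.
  exists (fun j => if j is inl _ then 1 else 0); split.
    by case => // _; rewrite ler01.
  split.
    rewrite big_sumType /= big_ord1 big1 ?addr0 //.
  move=> s; rewrite b'0 big_sumType /= big_ord1 big1 ?addr0.
    by rewrite y'E // mulr0.
  by move=> p _; rewrite mul0r.
have Dpos : 0 < Den z b sigma by rewrite lt0r hD (Den_ge0 _ (nonneg b Bb) h0).
pose W (j : J) := match j with
  | inl _ => 0
  | inr p => w p.1 * lam sigma p.2 * Den z (x p.1) (sdet p.2) / Den z b sigma end.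
have Wy : forall j s, W j * y' j s = W j * y j s.
  move=> [k|[i d]] s; first by rewrite /W !mul0r.
  have [->|Wn] := eqVneq (W (inr (i, d))) 0; first by rewrite !mul0r.
  rewrite y'E //; exists (x i) => //.
  exists (sdet d); split; first exact: sdet_ge0.
  split; first exact: sdet_sum.
  split.
    move=> s0 a nav; rewrite /sdet; case: eqP => // ea; exfalso.
    move: Wn; rewrite /W /= /lam (bigD1 s0) //= -ea (h2 _ _ nav).
    by rewrite mul0r mulr0 !mul0r eqxx.
  by move=> s'; rewrite /y Num_eq.
exists W; split.
  move=> [k|[i d]] /=; first by [].
  apply: divr_ge0; last exact: ltW.
  apply: mulr_ge0; first apply: mulr_ge0 => //; first exact: lam_ge0.
  by apply: Den_ge0 => // s a; exact: sdet_ge0.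
split.
  rewrite big_sumType /= big1 ?add0r //.
  rewrite -mulr_suml (comb _ h1 wb) divff //.
move=> s; rewrite hb.
under eq_bigr do rewrite Wy.
rewrite big_sumType /= big1 ?add0r; last by move=> k _; rewrite mul0r.
rewrite {1}/Num -(comb (fun s0 a => Pt M s0 a s * obs M s z) h1 wb) mulr_suml.
apply: eq_bigr => [[i d]] _ /=.
rewrite -/(Num z (x i) (sdet d) s).
have [hd|hd] := eqVneq (Den z (x i) (sdet d)) 0.
  rewrite hd (@Den0_Num0 z (x i) (sdet d) s (xnn i) (fun s0 a => @sdet_ge0 d s0 a) hd).
  by rewrite !mulr0 !mul0r.
by field; apply/andP; split.
Qed.

Lemma init_gen z0 : gen_prop [set init_belief M z0].
Proof.
have [hi _] := iota_distr M.
have nn : forall s, 0 <= init_belief M z0 s.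
  move=> s; rewrite /init_belief; apply: divr_ge0.
    by apply: mulr_ge0 => //; exact: obs_ge0.
  by apply: sumr_ge0 => sh _; apply: mulr_ge0 => //; exact: obs_ge0.
split; first by move=> b -> s; exact: nn.
exists 'I_1, (fun _ => init_belief M z0); split; first by [].
move=> b ->; exists (fun _ => 1); split; first by move=> _; exact: ler01.
by split; [rewrite big_ord1 | move=> s; rewrite big_ord1 mul1r].
Qed.

Lemma gen_fold z0 zs : gen_prop (est_MDP M z0 zs).
Proof.
rewrite /est_MDP; move: (init_gen z0); move: [set init_belief M z0].
elim: zs => [|z zs IH] B hB //=.
by apply: IH; apply: step.
Qed.

End Proof.

Theorem lemma5 (R : realType) (S Act Z : finType) (M : MDP R S Act Z)
    (z0 : Z) (zs : seq Z) :
  finite_set (vertices (est_MDP M z0 zs)).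
Proof.
have [_ [I [x [xB xg]]]] := gen_fold M z0 zs.
apply: (sub_finite_set _ (finite_image x (@finite_finset I setT))).
move=> b [Bb nc].
case: (pselect (exists i, x i = b)) => [[i <-]|nx]; first by exists i.
exfalso; apply: nc.
have [w [w0 [w1 wb]]] := xg b Bb.
exists #|I|, (fun j => w (enum_val j)), (fun j => x (enum_val j)).
split; first by move=> j.
split; first by rewrite -(big_enum_val (A := (pred_of_argType I : pred I))).
split.
  move=> j; split; first exact: xB.
  by move=> /= e; apply: nx; exists (enum_val j).
by move=> s; rewrite wb -(big_enum_val (A := (pred_of_argType I : pred I)) (fun i => w i * x i s)).
Qed.
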